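(* Let $n, m$ be positive integers and $\alpha \in (0,1)$. Form a random $m \times n$ array of zeros and ones in which each of the $mn$ entries is independently equal to $1$ with probability $\alpha$ and to $0$ with probability $1-\alpha$. Let $X$ be the number of deficient sets of three rows. Put $$p_n(\alpha) = (1-\alpha^3)^n + 3\bigl(1-\alpha^2(1-\alpha)\bigr)^n, \qquad \zeta(n) = \sqrt{\frac{2}{3e}}\left(\frac{1}{p_n(\alpha)}\right)^{1/2}.$$ If $m \le \zeta(n)$, then $\mathbb{P}(X=0) > 0$. Consequently, the largest number of rows in a $\mathcal{C}(n,2,3,A,1)$ partial covering array, with each row having expected weight $k=\alpha n$ in this random model, is at least $\zeta(n)$.
   Context: Let $A = \{(0,1,1),(1,0,1),(1,1,0),(1,1,1)\}$. A set of three rows of a $0$-$1$ array is called deficient if at least one of the four vectors in $A$ does not appear among the columns of the $3 \times n$ subarray formed by those three rows (in the sense that for some vector in $A$ no column, restricted to the three rows, equals it). A partial covering array $\mathcal{C}(n,2,3,A,1)$ is an $m\times n$ $0$-$1$ array such that for every choice of three rows, each vector of $A$ appears at least once among the columns of the selected rows; equivalently, no set of three rows is deficient. (Equivalently, viewing rows as subsets of an $n$-set, for any three rows $A',B',C'$ the sets $A'\cap B'\cap C'$, $A'\cap B'\cap C'^{c}$, $A'\cap B'^{c}\cap C'$, $A'^{c}\cap B'\cap C'$ are all nonempty.) *)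

(* Defs.v *)
From HB Require Import structures.
From mathcomp Require Import all_boot all_order all_algebra.
From mathcomp Require Import reals.
From mathcomp Require Import sequences.
Set Implicit Arguments. Unset Strict Implicit. Unset Printing Implicit Defensive.
Import Order.TTheory GRing.Theory Num.Theory.
Local Open Scope ring_scope.

(* An m x n 0-1 array: entry (i,j) is true iff it equals 1. *)
Definition array (m n : nat) := {ffun 'I_m * 'I_n -> bool}.

Definition vecA : seq (bool * bool * bool) :=
  [:: (false, true, true); (true, false, true); (true, true, false);
      (true, true, true)].

Definition col3 m n (M : array m n) (i j k : 'I_m) (c : 'I_n) :=
  (M (i, c), M (j, c), M (k, c)).

Definition deficient m n (M : array m n) (i j k : 'I_m) : bool :=
  ~~ all (fun v => [exists c, col3 M i j k c == v]) vecA.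

Definition num_deficient m n (M : array m n) : nat :=
  #|[set t : 'I_m * 'I_m * 'I_m |
      [&& (t.1.1 < t.1.2)%N, (t.1.2 < t.2)%N & deficient M t.1.1 t.1.2 t.2]]|.

(* M is a partial covering array C(n,2,3,A,1): no set of three distinct rows
   is deficient. *)
Definition is_PCA m n (M : array m n) : Prop :=
  forall i j k : 'I_m, i != j -> j != k -> i != k -> ~~ deficient M i j k.

Definition array_prob (R : realType) m n (alpha : R) (M : array m n) : R :=
  \prod_(p : 'I_m * 'I_n) (if M p then alpha else 1 - alpha).

Definition prob_X0 (R : realType) m n (alpha : R) : R :=
  \sum_(M : array m n | num_deficient M == 0%N) array_prob alpha M.

Definition p_n (R : realType) (n : nat) (alpha : R) : R :=
  (1 - alpha ^+ 3) ^+ n + 3%:R * (1 - alpha ^+ 2 * (1 - alpha)) ^+ n.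

Definition zeta (R : realType) (n : nat) (alpha : R) : R :=
  Num.sqrt (2%:R / (3%:R * expR 1)) * Num.sqrt ((p_n n alpha)^-1).

(* Main.v *)
Require Import Defs.
From HB Require Import structures.
From mathcomp Require Import all_boot all_order all_algebra.
From mathcomp Require Import reals sequences exp zify ring lra.
Import Order.TTheory GRing.Theory Num.Theory.
Lemma bin2E N : 'C(N, 2) * 2 = N * N.-1.
Proof. elim: N => [|N IH] //; rewrite binS bin1 mulnDl IH; case: N {IH} => // N /=; lia. Qed.

Lemma sumC2 N : 6 * \sum_(k < N) 'C(k, 2) <= N * N * N.
Proof.
elim: N => [|N IH]; first by rewrite big_ord0.
rewrite big_ord_recr /= mulnDr. have := bin2E N. case: N IH => [|N] IH /=; first by rewrite big_ord0.
move: IH; set S := \sum_(i < N.+1) _; set C := 'C(N.+1, 2); move=> IH h. nia.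
Qed.

Lemma cnt_eq N : \sum_(k < N) \sum_(j < N | j < k) \sum_(i < N | i < j) 1 = \sum_(k < N) 'C(k, 2).
Proof.
apply: eq_bigr => k _.
transitivity (\sum_(j < N | j < k) (j : nat)).
  apply: eq_bigr => j _.
  rewrite -(big_ord_widen N (fun _ => 1)) ?(ltnW (ltn_ord j)) //.
  by rewrite sum1_card card_ord.
rewrite -(big_ord_widen N (fun j : nat => j)) ?(ltnW (ltn_ord k)) //.
by rewrite -bin2_sum big_mkord.
Qed.

Local Open Scope ring_scope.
Set Implicit Arguments. Unset Strict Implicit. Unset Printing Implicit Defensive.

Section Prob.
Variable R : realType.

Lemma ffun_sum (I : finType) (F : I -> bool -> R) :
  \sum_(f : {ffun I -> bool}) \prod_i F i (f i) = \prod_i (F i true + F i false).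
Proof. by rewrite -bigA_distr_bigA; apply: eq_bigr => i _; rewrite big_bool. Qed.

Definition w (a : R) (b : bool) : R := if b then a else 1 - a.

Lemma wsum (a : R) : w a true + w a false = 1.
Proof. by rewrite /w addrC subrK. Qed.

Lemma natr_nexists (I : finType) (P : pred I) :
  ((~~ [exists c, P c]) : nat)%:R = \prod_c ((~~ P c) : nat)%:R :> R.
Proof.
case: (boolP [exists c, P c]) => [/existsP [c Pc]|].
  by rewrite (bigD1 c) //= Pc mul0r.
rewrite negb_exists => /forallP H; rewrite big1 // => c _; by rewrite H.
Qed.

Lemma natr_neg (b : bool) : ((~~ b) : nat)%:R = 1 - (b : nat)%:R :> R.
Proof. by case: b; rewrite /= ?subrr ?subr0. Qed.

Lemma prod_pred1 (I : finType) (i : I) (X : I -> R) :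
  \prod_r (if r == i then X r else 1) = X i.
Proof. by rewrite -big_mkcond big_pred1_eq. Qed.

Definition toArr m n (C : {ffun 'I_n -> {ffun 'I_m -> bool}}) : array m n :=
  [ffun p => C p.2 p.1].
Definition fromArr m n (M : array m n) : {ffun 'I_n -> {ffun 'I_m -> bool}} :=
  [ffun c => [ffun r => M (r, c)]].

Lemma toArr_bij m n : bijective (@toArr m n).
Proof.
exists (@fromArr m n) => x.
  by apply/ffunP => c; apply/ffunP => r; rewrite !ffunE.
by apply/ffunP => -[r c]; rewrite !ffunE.
Qed.

Lemma prob_toArr m n (a : R) C :
  array_prob a (@toArr m n C) = \prod_c \prod_r w a (C c r).
Proof.
rewrite exchange_big /array_prob pair_bigA /=.
by apply: eq_bigr => p _; rewrite ffunE.
Qed.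

Lemma prob_sum m n (a : R) : \sum_(M : array m n) array_prob a M = 1.
Proof.
rewrite /array_prob (ffun_sum (fun _ b => w a b)) big1 // => p _; exact: wsum.
Qed.

Lemma prob_ge0 m n (a : R) (M : array m n) : 0 <= a <= 1 -> 0 <= array_prob a M.
Proof.
move=> /andP[a0 a1]; apply: prodr_ge0 => p _; case: (M p) => //.
by rewrite subr_ge0.
Qed.

Lemma key m n (a : R) (i j k : 'I_m) (v : bool * bool * bool) :
  i != j -> j != k -> i != k ->
  \sum_(M : array m n) array_prob a M * ((~~ [exists c, col3 M i j k c == v]) : nat)%:R
  = (1 - w a v.1.1 * w a v.1.2 * w a v.2) ^+ n.
Proof.
move=> ij jk ik.
rewrite (reindex (@toArr m n)); last by apply: onW_bij; exact: toArr_bij.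
under eq_bigr => C _ do rewrite prob_toArr natr_nexists -big_split /=.
pose G (col : {ffun 'I_m -> bool}) :=
  \prod_r w a (col r) * ((~~ ((col i, col j, col k) == v)) : nat)%:R.
transitivity (\sum_(C : {ffun 'I_n -> {ffun 'I_m -> bool}}) \prod_c G (C c)).
  apply: eq_bigr => C _; apply: eq_bigr => c _; by rewrite /G /col3 !ffunE.
rewrite -(bigA_distr_bigA (fun _ col => G col)) /= prodr_const card_ord.
congr (_ ^+ _).
rewrite /G; clear G; case: v => [[va vb] vd] /=.
under eq_bigr => col _ do rewrite natr_neg mulrBr mulr1.
rewrite sumrB (ffun_sum (fun _ b => w a b)) big1; last by move=> r _; exact: wsum.
congr (_ - _).
pose h r (x : bool) : R := (if r == i then ((x == va) : nat)%:R else 1) *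
   (if r == j then ((x == vb) : nat)%:R else 1) * (if r == k then ((x == vd) : nat)%:R else 1).
transitivity (\sum_(col : {ffun 'I_m -> bool}) \prod_r (w a (col r) * h r (col r))).
  apply: eq_bigr => col _; rewrite big_split /=; congr (_ * _).
  rewrite /h !big_split /= (prod_pred1 i (fun r => ((col r == va) : nat)%:R)).
  rewrite (prod_pred1 j (fun r => ((col r == vb) : nat)%:R)).
  rewrite (prod_pred1 k (fun r => ((col r == vd) : nat)%:R)).
  rewrite !xpair_eqE.
  by case: (col i == va); case: (col j == vb); case: (col k == vd); rewrite /= ?mul0r ?mulr0 ?mul1r ?mulr1.
rewrite (ffun_sum (fun r b => w a b * h r b)).
transitivity (\prod_r ((if r == i then w a va else 1) * (if r == j then w a vb else 1)
   * (if r == k then w a vd else 1))).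
  apply: eq_bigr => r _; rewrite /h; clear h.
  case: (eqVneq r i) => [->|ri].
    rewrite (negbTE ij) (negbTE ik).
    by case: va; rewrite /= ?mulr1 ?mulr0 ?addr0 ?add0r.
  case: (eqVneq r j) => [Erj|rj]; first subst r.
    rewrite (negbTE jk).
    by case: vb; rewrite /= ?mulr1 ?mulr0 ?addr0 ?add0r ?mul1r.
  case: (eqVneq r k) => [Erk|rk]; first subst r.
    by case: vd; rewrite /= ?mulr1 ?mulr0 ?addr0 ?add0r ?mul1r.
  by rewrite /= !mulr1 wsum.
by rewrite !big_split /= !prod_pred1.
Qed.

Lemma nall_bound (V : Type) (P : pred V) (s : seq V) :
  ((~~ all P s) : nat)%:R <= \sum_(v <- s) ((~~ P v) : nat)%:R :> R.
Proof.
elim: s => [|x s IH]; first by rewrite big_nil.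
rewrite big_cons /=; case: (P x) => /=.
  by rewrite add0r.
rewrite lerDl; apply: sumr_ge0 => v _; exact: ler0n.
Qed.

Lemma triple_bound m n (a : R) (i j k : 'I_m) : 0 <= a <= 1 ->
  i != j -> j != k -> i != k ->
  \sum_(M : array m n) array_prob a M * ((deficient M i j k) : nat)%:R <= p_n n a.
Proof.
move=> a01 ij jk ik.
apply: (@le_trans _ _ (\sum_(M : array m n) array_prob a M *
   \sum_(v <- vecA) ((~~ [exists c, col3 M i j k c == v]) : nat)%:R)).
  apply: ler_sum => M _; apply: ler_wpM2l; first exact: prob_ge0.
  exact: nall_bound.
under eq_bigr => M _ do rewrite mulr_sumr.
rewrite exchange_big /=.
under eq_bigr => v _ do rewrite key //.
rewrite /vecA !big_cons big_nil /p_n /w /=.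
have -> : 1 - (1 - a) * a * a = 1 - a ^+ 2 * (1 - a) by ring.
have -> : 1 - a * (1 - a) * a = 1 - a ^+ 2 * (1 - a) by ring.
have -> : 1 - a * a * (1 - a) = 1 - a ^+ 2 * (1 - a) by ring.
have -> : 1 - a * a * a = 1 - a ^+ 3 by ring.
rewrite le_eqVlt; apply/orP; left; apply/eqP; ring.
Qed.


Lemma neq_lt N (i j : 'I_N) : (i < j)%N -> i != j.
Proof. by move=> h; apply/eqP => E; rewrite E ltnn in h. Qed.

Definition Y N n (M : array N n) : nat :=
  \sum_(k < N) \sum_(j < N | (j < k)%N) \sum_(i < N | (i < j)%N) deficient M i j k.

Lemma expY N n (a : R) : 0 <= a <= 1 ->
  \sum_(M : array N n) array_prob a M * (Y M)%:R
  <= (\sum_(k < N) 'C(k, 2))%:R * p_n n a.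
Proof.
move=> a01; rewrite -cnt_eq natr_sum mulr_suml.
under eq_bigr => M _ do rewrite /Y natr_sum mulr_sumr.
rewrite exchange_big /=; apply: ler_sum => k _.
under eq_bigr => M _ do rewrite natr_sum mulr_sumr.
rewrite exchange_big natr_sum mulr_suml /=; apply: ler_sum => j jk.
under eq_bigr => M _ do rewrite natr_sum mulr_sumr.
rewrite exchange_big natr_sum mulr_suml /=; apply: ler_sum => i ij.
rewrite mul1r; apply: triple_bound => //; try exact: neq_lt.
apply: neq_lt; exact: ltn_trans ij jk.
Qed.

Lemma exs12 n (x y z : 'I_n -> bool) a b d :
  [exists c, (y c, x c, z c) == (a, b, d)] = [exists c, (x c, y c, z c) == (b, a, d)].
Proof.
apply: eq_existsb => c; rewrite !xpair_eqE.
by case: (x c == b); case: (y c == a).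
Qed.

Lemma exs23 n (x y z : 'I_n -> bool) a b d :
  [exists c, (x c, z c, y c) == (a, b, d)] = [exists c, (x c, y c, z c) == (a, d, b)].
Proof.
apply: eq_existsb => c; rewrite !xpair_eqE.
by case: (x c == a); case: (y c == d); case: (z c == b).
Qed.

Lemma def_swap12 m n (M : array m n) i j k : deficient M j i k = deficient M i j k.
Proof.
rewrite /deficient /vecA /col3 /=.
rewrite !(exs12 (fun c => M (i, c)) (fun c => M (j, c)) (fun c => M (k, c))).
by case: [exists c, _ == (false, true, true)]; case: [exists c, _ == (true, false, true)].
Qed.

Lemma def_swap23 m n (M : array m n) i j k : deficient M i k j = deficient M i j k.
Proof.
rewrite /deficient /vecA /col3 /=.
rewrite !(exs23 (fun c => M (i, c)) (fun c => M (j, c)) (fun c => M (k, c))).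
by case: [exists c, _ == (true, false, true)]; case: [exists c, _ == (true, true, false)].
Qed.
End Prob.

Section Main.
Variable R : realType.

Lemma sorted_ok N n (M0 : array N n) (a b c : 'I_N) :
  (a < b)%N -> (b < c)%N ->
  \sum_(j < N | (j < c)%N) \sum_(i < N | (i < j)%N) (deficient M0 i j c : nat) = 0%N ->
  ~~ deficient M0 a b c.
Proof.
move=> ab bc /eqP; rewrite sum_nat_eq0 => /forallP /(_ b); rewrite bc /=.
rewrite sum_nat_eq0 => /forallP /(_ a); rewrite ab /=.
by case: (deficient M0 a b c).
Qed.

Lemma perm_ok N n (M0 : array N n) (K : {set 'I_N}) :
  (forall x y z, x \in K -> y \in K -> z \in K -> (x < y)%N -> (y < z)%N ->
     ~~ deficient M0 x y z) ->
  forall a b c, a \in K -> b \in K -> c \in K -> a != b -> b != c -> a != c ->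
  ~~ deficient M0 a b c.
Proof.
move=> H a b c aK bK cK nab nbc nac.
have nab' : (a : nat) != b by [].
have nbc' : (b : nat) != c by [].
have nac' : (a : nat) != c by [].
case: (ltngtP a b) => hab; case: (ltngtP b c) => hbc; case: (ltngtP a c) => hac;
  first [ lia
        | by apply: H
        | rewrite -def_swap12; by apply: H
        | rewrite -def_swap23; by apply: H
        | rewrite -def_swap12 -def_swap23; by apply: H
        | rewrite -def_swap23 -def_swap12; by apply: H
        | rewrite -def_swap12 -def_swap23 -def_swap12; by apply: H ].
Qed.

End Main.

Unset Implicit Arguments.
Set Strict Implicit.

Theorem theorem2 (R : realType) (n m : nat) (alpha : R) :
  (0 < n)%N -> (0 < m)%N -> 0 < alpha < 1 ->
  m%:R <= zeta n alpha ->
  0 < prob_X0 m n alpha /\ exists M : array m n, is_PCA M.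
Proof.
move=> n0 m0 /andP[a0 a1] hz.
have a01 : 0 <= alpha <= 1 by rewrite !ltW.
set p := p_n n alpha.
have p0 : 0 < p.
  have X0 : 0 < (1 - alpha ^+ 3) ^+ n.
    apply: exprn_gt0; rewrite subr_gt0; apply: exprn_ilt1 => //; exact: ltW.
  have Y0 : 0 <= (1 - alpha ^+ 2 * (1 - alpha)) ^+ n.
    apply: exprn_ge0; rewrite subr_ge0.
    have h1 : alpha ^+ 2 <= 1 by apply: exprn_ile1; rewrite ltW.
    have h2 : 0 <= alpha ^+ 2 by apply: exprn_ge0; rewrite ltW.
    nra.
  rewrite /p /p_n; lra.
set mR : R := m%:R.
have mR0 : 0 <= mR by rewrite /mR ler0n.
have E2 : 2 <= expR (1 : R) by have := expR_ge1Dx (1 : R); lra.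
set c : R := 2%:R / (3%:R * expR 1).
have c0 : 0 <= c by rewrite /c divr_ge0 // mulr_ge0 // expR_ge0.
have cE : c * (3 * expR 1) = 2.
  rewrite /c divfK //; apply/eqP => h; lra.
have c13 : c <= 1 / 3 by nra.
have q13 : mR ^+ 2 * p <= 1 / 3.
  have : mR ^+ 2 <= c / p.
    move: hz; rewrite /zeta -/p -/c -sqrtrM // => hz.
    have := ler_pM mR0 mR0 hz hz; rewrite -expr2 -[X in _ <= X]expr2 sqr_sqrtr //.
    by rewrite divr_ge0 // ltW.
  move=> h; apply: (le_trans _ c13).
  have := ler_wpM2r (ltW p0) h; rewrite divfK //; exact: lt0r_neq0.
pose N := (m + m)%N.
have [M0 hM0] : exists M0 : array N n, (Y M0 <= m)%N.
  case: (boolP [exists M0 : array N n, (Y M0 <= m)%N]) => [/existsP //|].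
  rewrite negb_exists => /forallP H.
  have hc := sumC2 N.
  set cnt := \sum_(k < N) 'C(k, 2) in hc.
  have hE := expY N n a01; rewrite -/cnt -/p in hE.
  have low : (m.+1)%:R <= \sum_(M : array N n) array_prob alpha M * (Y M)%:R.
    have <- : \sum_(M : array N n) array_prob alpha M * (m.+1)%:R = (m.+1)%:R.
      by rewrite -mulr_suml prob_sum mul1r.
    apply: ler_sum => M _; apply: ler_wpM2l; first exact: prob_ge0.
    by rewrite ler_nat ltnNge H.
  have hcR : 6 * cnt%:R <= 8 * mR ^+ 3 :> R.
    have -> : 8 * mR ^+ 3 = ((N * N * N)%N)%:R.
      by rewrite /N !natrM natrD /mR; ring.
    have -> : 6 * cnt%:R = ((6 * cnt)%N)%:R :> R by rewrite natrM.
    by rewrite ler_nat.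
  have h1 : 6 * cnt%:R * p <= 8 * mR ^+ 3 * p by apply: ler_wpM2r => //; exact: ltW.
  have h2 : mR * (mR ^+ 2 * p) <= mR * (1 / 3) by apply: ler_wpM2l.
  have e : mR ^+ 3 * p = mR * (mR ^+ 2 * p) by ring.
  have hm : (m.+1)%:R = mR + 1 :> R by rewrite /mR -addn1 natrD.
  rewrite hm in low.
  have : 6 * (cnt%:R * p) <= 8 * (mR * (1/3)).
    by rewrite mulrA (le_trans h1) // -mulrA e ler_wpM2l.
  lra.
pose inner (k : 'I_N) := \sum_(j < N | (j < k)%N) \sum_(i < N | (i < j)%N)
   (deficient M0 i j k : nat).
pose S := [set k : 'I_N | (0 < inner k)%N].
have hS : (#|S| <= m)%N.
  apply: leq_trans hM0; rewrite -sum1_card big_mkcond /=.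
  apply: leq_sum => k _; rewrite inE; rewrite -/(inner k); by case: (inner k).
pose K := ~: S.
have hK : (m <= #|K|)%N.
  have := cardsC S; rewrite card_ord -/K /N => h.
  by rewrite -(leq_add2l #|S|) h leq_add2r.
have Kok : forall x y z, x \in K -> y \in K -> z \in K -> (x < y)%N -> (y < z)%N ->
     ~~ deficient M0 x y z.
  move=> x y z _ _ zK xy yz; apply: sorted_ok xy yz _.
  move: zK; rewrite inE /S inE -/(inner z); by case: (inner z).
have x0 : 'I_N by exists 0%N; rewrite /N; lia.
pose f (i : 'I_m) : 'I_N := nth x0 (enum K) i.
have sz : forall i : 'I_m, (i < size (enum K))%N.
  by move=> i; rewrite -cardE; exact: leq_trans (ltn_ord i) hK.
have fK : forall i, f i \in K by move=> i; rewrite -mem_enum mem_nth.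
have finj : forall i j, (f i == f j) = (i == j).
  by move=> i j; rewrite /f nth_uniq // enum_uniq.
pose M' : array m n := [ffun q => M0 (f q.1, q.2)].
have defM' : forall i j k, deficient M' i j k = deficient M0 (f i) (f j) (f k).
  move=> i j k; rewrite /deficient /col3; congr (~~ _).
  by apply: eq_all => v; apply: eq_existsb => cc; rewrite !ffunE.
have PCA : is_PCA M'.
  move=> i j k ij jk ik; rewrite defM'.
  by apply: (perm_ok Kok); rewrite ?fK ?finj.
split; last by exists M'.
have nd : num_deficient M' == 0%N.
  rewrite /num_deficient cards_eq0; apply/eqP/setP => t; rewrite !inE.
  apply/negbTE/negP => /and3P [h1 h2 h3].
  have := PCA t.1.1 t.1.2 t.2 (neq_lt h1) (neq_lt h2) (neq_lt (ltn_trans h1 h2)).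
  by rewrite h3.
rewrite /prob_X0 (bigD1 M') //=.
have pos : 0 < array_prob alpha M'.
  apply: prodr_gt0 => q _; case: (M' q) => //; by rewrite subr_gt0.
apply: (lt_le_trans pos); rewrite lerDl; apply: sumr_ge0 => M _; exact: prob_ge0.
Qed.
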